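(* Let $\mathcal{R}$ be a TRS, $s$ a total term, and $S$ a reduction strongly $p$-converging from $s$ to $t$. Then $S$ is total (all its terms and $t$ are total) iff no prefix of $S$ has a volatile position.
   Context: Total terms contain no $\bot$; partial terms are terms over $\Sigma_\bot=\Sigma\uplus\{\bot\}$ ordered by $\le_\bot$ (replacing subterms by $\bot$), a complete semilattice; $\liminf_{\iota\to\alpha}a_\iota=\bigvee_{\beta<\alpha}\bigwedge_{\beta\le\iota<\alpha}a_\iota$. A reduction $S=(t_\iota\to_{\pi_\iota}t_{\iota+1})_{\iota<\alpha}$ with contexts $c_\iota$ ($t_\iota$ with position $\pi_\iota$ replaced by $\bot$) strongly $p$-converges to $t$ if $\liminf_{\iota\to\lambda}c_\iota=t_\lambda$ for every limit $\lambda<\alpha$ and $t$ is the last term (closed) or $t=\liminf_{\iota\to\alpha}c_\iota$ (open). A position $\pi$ is volatile in an open reduction $(t_\iota\to_{\pi_\iota}t_{\iota+1})_{\iota<\lambda}$ if for every $\beta<\lambda$ there is $\beta\le\gamma<\lambda$ with $\pi_\gamma=\pi$; a prefix of $S$ is $S|_\beta=(t_\iota\to_{\pi_\iota}t_{\iota+1})_{\iota<\beta}$, $\beta\le\alpha$. *)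

(* Defs.v *)
From mathcomp Require Import all_boot.
Set Implicit Arguments. Unset Strict Implicit. Unset Printing Implicit Defensive.

Section Defs.

Variables (F V : Type) (ar : F -> nat).

Inductive symb : Type := Sym of F | Bot.

(* Positions are finite sequences of naturals (head = first step from root). *)
Definition pos := seq nat.

(* A (possibly infinite) partial term over Sigma_bot, given by its labelling *)
(* of positions: None = "not a position", Some (Sym f), Some Bot.            *)
Definition pt := pos -> option symb.

Definition wf (t : pt) : Prop :=
  t [::] <> None /\
  forall p i, t (rcons p i) <> None <-> exists2 f, t p = Some (Sym f) & i < ar f.

Definition total_term (t : pt) : Prop := forall p, t p <> Some Bot.

(* s <=_bot t : s is obtained from t by replacing subterms with bot, i.e.    *)
Definition le_bot (s t : pt) : Prop :=
  forall p, s p <> None -> s p <> Some Bot -> t p = s p.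

Definition is_glb (P : pt -> Prop) (g : pt) : Prop :=
  wf g /\ (forall x, P x -> le_bot g x) /\
  (forall h, wf h -> (forall x, P x -> le_bot h x) -> le_bot h g).

Definition is_lub (P : pt -> Prop) (g : pt) : Prop :=
  wf g /\ (forall x, P x -> le_bot x g) /\
  (forall h, wf h -> (forall x, P x -> le_bot x h) -> le_bot g h).

Definition repl (t : pt) (p : pos) (u : pt) : pt :=
  fun q => if prefix p q then u (drop (size p) q) else t q.

Definition botpt : pt := fun q => if q is [::] then Some Bot else None.

Definition ctx (t : pt) (p : pos) : pt := repl t p botpt.

Inductive fterm : Type := FVar of V | FApp of F & seq fterm.

Fixpoint fwf (l : fterm) : Prop :=
  match l with
  | FVar _ => True
  | FApp f ts => size ts = ar f /\
      (fix allwf (us : seq fterm) : Prop :=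
         match us with [::] => True | u :: us' => fwf u /\ allwf us' end) ts
  end.

Fixpoint occurs (x : V) (l : fterm) : Prop :=
  match l with
  | FVar y => x = y
  | FApp _ ts =>
      (fix exo (us : seq fterm) : Prop :=
         match us with [::] => False | u :: us' => occurs x u \/ exo us' end) ts
  end.

Fixpoint subst (l : fterm) (sigma : V -> pt) (p : pos) {struct p} : option symb :=
  match l with
  | FVar x => sigma x p
  | FApp f ts =>
      match p with
      | [::] => Some (Sym f)
      | i :: p' => if onth ts i is Some u then subst u sigma p' else None
      end
  end.

Definition rule := (fterm * fterm)%type.

Definition is_TRS (R : rule -> Prop) : Prop :=
  forall l r, R (l, r) ->
    fwf l /\ fwf r /\ (forall x, l <> FVar x) /\ (forall x, occurs x r -> occurs x l).

Definition rstep (R : rule -> Prop) (t : pt) (p : pos) (t' : pt) : Prop :=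
  exists l r (sigma : V -> pt),
    R (l, r) /\ (forall x, wf (sigma x)) /\
    (forall q, t (p ++ q) = subst l sigma q) /\
    (forall q, t' q = repl t p (subst r sigma) q).

(* Ordinals: elements of an arbitrary well-ordered type (O, olt).            *)
Variables (O : Type) (olt : O -> O -> Prop).

Definition well_order : Prop :=
  (forall a b c, olt a b -> olt b c -> olt a c) /\
  (forall a, ~ olt a a) /\
  (forall a b, olt a b \/ a = b \/ olt b a) /\
  well_founded olt.

Definition ole (a b : O) : Prop := olt a b \/ a = b.

Definition is_least (z : O) : Prop := forall a, ~ olt a z.

Definition is_succ (a b : O) : Prop := olt a b /\ forall c, olt a c -> ole b c.

Definition is_limit (l : O) : Prop :=
  (exists a, olt a l) /\ forall a, olt a l -> exists2 b, olt a b & olt b l.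

Definition is_liminf (a : O -> pt) (lam : O) (g : pt) : Prop :=
  exists b : O -> pt,
    (forall beta, olt beta lam ->
       is_glb (fun x => exists2 i, ole beta i /\ olt i lam & x = a i) (b beta)) /\
    is_lub (fun x => exists2 beta, olt beta lam & x = b beta) g.

Definition reduction (R : rule -> Prop) (z alpha : O) (t : O -> pt) (pi : O -> pos) : Prop :=
  is_least z /\
  (forall i, olt i alpha -> wf (t i)) /\
  (forall i j, olt i alpha -> is_succ i j -> rstep R (t i) (pi i) (t j)).

(* Strong p-convergence of S to u. Closed reductions (length a successor or  *)
(* 0) have last term t_alpha; open ones have limit length.                   *)
Definition strongly_pconverges (alpha : O) (t : O -> pt) (pi : O -> pos) (u : pt) : Prop :=
  wf u /\
  (forall lam, is_limit lam -> olt lam alpha ->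
     is_liminf (fun i => ctx (t i) (pi i)) lam (t lam)) /\
  (~ is_limit alpha -> u = t alpha) /\
  (is_limit alpha -> is_liminf (fun i => ctx (t i) (pi i)) alpha u).

Definition volatile (beta : O) (pi : O -> pos) (p : pos) : Prop :=
  is_limit beta /\
  forall b, olt b beta -> exists2 c, ole b c /\ olt c beta & pi c = p.

Definition total_reduction (alpha : O) (t : O -> pt) (u : pt) : Prop :=
  (forall i, olt i alpha -> total_term (t i)) /\ total_term u.

End Defs.

(* Main.v *)
Require Import Defs.
From mathcomp Require Import all_boot.
Set Implicit Arguments. Unset Strict Implicit. Unset Printing Implicit Defensive.

Section Terms.
Variables (F V : Type) (ar : F -> nat).

Definition exoP (x : V) := fix exo (us : seq (fterm F V)) : Prop :=
  match us with [::] => False | u :: us' => occurs x u \/ exo us' end.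

Lemma occ_path (sigma : V -> pt F) (x : V) :
  forall l : fterm F V, occurs x l -> exists w, forall q, subst l sigma (w ++ q) = sigma x q.
Proof.
fix IH 1. intros [y|f ts] H.
- exists [::] => q /=. simpl in H. rewrite H. by case: q.
- have: exists i w, forall q, (if onth ts i is Some u then subst u sigma (w ++ q) else None) = sigma x q.
    refine ((fix aux (us : seq (fterm F V)) : exoP x us -> exists i w, forall q, (if onth us i is Some u then subst u sigma (w ++ q) else None) = sigma x q := _) ts H).
    case: us => [|u us] /=; first by [].
    case=> [Hu|Hus].
    + have [w Hw] := IH u Hu. by exists 0, w.
    + have [i [w Hw]] := aux us Hus. by exists i.+1, w.
  case=> i [w Hw]. by exists (i :: w) => q /=.
Qed.

Lemma occ_app (x : V) (f : F) : forall ts i u, onth ts i = Some u -> occurs x u -> occurs x (FApp f ts).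
Proof.
elim=> [|a ts IH] [|i] u //=.
- by case=> ->; left.
- move=> H Hu; right; exact: (IH i u H Hu).
Qed.

Lemma subst_bot (sigma : V -> pt F) : forall q (r : fterm F V),
  subst r sigma q = Some (Bot F) -> exists x q2, occurs x r /\ sigma x q2 = Some (Bot F).
Proof.
elim=> [|i q IH] [y|f ts] //=.
- by move=> H; exists y, [::].
- by move=> H; exists y, (i :: q).
- case E: (onth ts i) => [u|] // H.
  have [x [q2 [Ho Hs]]] := IH u H.
  exists x, q2; split=> //; exact: occ_app E Ho.
Qed.

Lemma step_total (R : rule F V -> Prop) (t t' : pt F) p :
  is_TRS ar R -> rstep ar R t p t' -> total_term t -> total_term t'.
Proof.
move=> HR [l [r [sigma [HRlr [_ [Hl Ht']]]]]] Ht q.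
rewrite Ht' /repl. case: ifP => _; last exact: Ht.
move=> /subst_bot [x [q2 [Ho Hs]]].
have [_ [_ [_ Hocc]]] := HR _ _ HRlr.
have [w Hw] := occ_path sigma (Hocc _ Ho).
apply: (Ht (p ++ w ++ q2)). by rewrite Hl Hw.
Qed.

Lemma wf_rcons (t : pt F) q j : wf ar t -> t (rcons q j) <> None ->
  exists2 f, t q = Some (Sym f) & j < ar f.
Proof. by move=> [_ H] /H. Qed.

Lemma wf_prefix (t : pt F) q1 : wf ar t -> forall q2, t (q1 ++ q2) <> None -> t q1 <> None.
Proof.
move=> Hw; elim/last_ind => [|q2 j IH]; first by rewrite cats0.
rewrite -rcons_cat => /(wf_rcons Hw) [f Hf _]; apply: IH; by rewrite Hf.
Qed.

Lemma wf_take (t : pt F) q n : wf ar t -> t q <> None -> t (take n q) <> None.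
Proof. move=> Hw H; apply: (wf_prefix Hw (q2 := drop n q)); by rewrite cat_take_drop. Qed.

End Terms.

Section Spine.
Variables (F : Type) (ar : F -> nat).

Lemma take_rcons_size (p : pos) j : take (size p) (rcons p j) = p.
Proof. by rewrite -cats1 take_size_cat. Qed.

Lemma prefix_take (r s : pos) : prefix r s -> r = take (size r) s.
Proof. by rewrite prefixE => /eqP ->. Qed.

Definition spine (T : pt F) (qs : pos) : pt F := fun r =>
  if prefix r qs then T r
  else if (0 < size r) && prefix (take (size r).-1 r) qs then
    (if T r is Some _ then Some (Bot F) else None) else None.

Lemma spine_nsym T qs r f : spine T qs r = Some (Sym f) -> prefix r qs.
Proof.
rewrite /spine; case: ifP => // _; case: ifP => // _; by case: (T r).
Qed.

Lemma spine_wf T qs : wf ar T -> wf ar (spine T qs).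
Proof.
move=> [Hr Hw]; split; first by rewrite /spine prefix0s.
move=> p j. rewrite {1}/spine size_rcons /= take_rcons_size.
case: (boolP (prefix (rcons p j) qs)) => H1.
  have H2 : prefix p qs := prefix_trans (prefix_rcons p j) H1.
  by rewrite /spine H2; exact: Hw.
case: (boolP (prefix p qs)) => H2.
  rewrite /spine H2. case E: (T (rcons p j)) => [a|].
    split => // _; apply/Hw; by rewrite E.
  split => //; move/Hw; by rewrite E.
split => //; case=> f /spine_nsym; by rewrite (negbTE H2).
Qed.

Lemma deepest (T : pt F) q : wf ar T ->
  exists m, [/\ m <= size q, T (take m q) <> None &
    forall n, m < n -> n <= size q -> T (take n q) = None].
Proof.
move=> Hw.
have exP : exists i, (fun n => (n <= size q) && isSome (T (take n q))) i.
  exists 0; rewrite /= take0; case E: (T [::]) => //; by case: Hw => /(_ E).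
have ubP : forall i, (fun n => (n <= size q) && isSome (T (take n q))) i -> i <= size q.
  by move=> i /andP[].
case: (ex_maxnP exP ubP) => m /andP [Hm HT] Hmax.
exists m; split=> //.
  by case: (T (take m q)) HT.
move=> n Hmn Hn. case E: (T (take n q)) => [a|] //.
have := Hmax n; rewrite Hn E /= => /(_ isT). by rewrite leqNgt Hmn.
Qed.

Variables (O : Type) (olt : O -> O -> Prop).

Lemma spine_lemma (T g : pt F) mu beta0 (c : O -> pt F) q :
  wf ar T -> total_term T -> olt beta0 mu ->
  (forall k, ole olt beta0 k -> olt k mu -> forall n, c k (take n q) = T (take n q)) ->
  is_liminf ar olt c mu g -> forall n, g (take n q) = T (take n q).
Proof.
move=> HwT HtT Hb0 Hc [b [Hglb [Hgwf [Hub _]]]].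
have [Hbwf [_ Hmax]] := Hglb beta0 Hb0.
have Hbg : le_bot (b beta0) g := Hub _ (ex_intro2 _ _ beta0 Hb0 erefl).
have [m [Hmq HTm Hdeep]] := deepest q HwT.
set qs := take m q.
have Hhb : le_bot (spine T qs) (b beta0).
  apply: Hmax; first exact: spine_wf.
  move=> x [i [Hi1 Hi2] ->] r Hr1 Hr2.
  have Hpr : prefix r qs.
    move: Hr1 Hr2; rewrite /spine; case: ifP => // _; case: ifP => // _; by case: (T r).
  rewrite /spine Hpr.
  have -> : r = take (size r) q.
    rewrite {1}(prefix_take Hpr) /qs -take_min. congr take.
    apply/minn_idPl. by rewrite -(size_takel Hmq) -/qs; case/prefixP: Hpr => s ->; rewrite size_cat leq_addr.
  exact: Hc.
have Hle : forall n, n <= m -> g (take n q) = T (take n q).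
  move=> n Hn.
  have Hpre : prefix (take n q) qs.
    by rewrite /qs -(subnKC Hn) takeD prefix_prefix.
  have HT : T (take n q) <> None.
    have := wf_take (q:=take m q) (n:=n) HwT HTm. by rewrite -take_min (minn_idPl Hn).
  have Hsp : spine T qs (take n q) = T (take n q) by rewrite /spine Hpre.
  case E: (T (take n q)) => [[f|]|] //; last first.
    by have := HtT (take n q); rewrite E.
  have H1 : spine T qs (take n q) = Some (Sym f) by rewrite Hsp E.
  have H2 : b beta0 (take n q) = Some (Sym f) by rewrite (Hhb _) ?H1.
  by rewrite (Hbg _) ?H2.
move=> n.
have Htk : take n q = take (minn n (size q)) q.
  case: (leqP n (size q)) => H //.
  by rewrite take_size take_oversize // ltnW.
rewrite Htk; move: (minn n (size q)) (geq_minr n (size q)) => n' Hn'.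
case: (leqP n' m) => Hnm; first exact: Hle.
rewrite (Hdeep n' Hnm Hn').
case E: (g (take n' q)) => [a|] //.
have Hg1 : g (take m.+1 q) <> None.
  have := wf_take (q := take n' q) (n:=m.+1) Hgwf. rewrite -take_min (minn_idPl Hnm) E. by apply.
have Hmlt : m < size q by apply: leq_trans Hnm Hn'.
move: Hg1; rewrite (take_nth 0 Hmlt) => /(wf_rcons Hgwf) [f Hf Hj].
have := Hdeep m.+1 (ltnSn m) Hmlt. rewrite (take_nth 0 Hmlt).
move: HwT => [_ HwT2] Hn. exfalso. apply: (proj2 (HwT2 _ _) _) Hn.
exists f => //. by rewrite -Hle.
Qed.

End Spine.

Lemma prefix_rconsE (s p : pos) j : prefix s (rcons p j) -> s = rcons p j \/ prefix s p.
Proof.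
move=> Hs; have E := prefix_take Hs.
case: (leqP (size s) (size p)) => H.
  right; apply/prefixP; exists (drop (size s) p).
  by rewrite {1}E -cats1 takel_cat // cat_take_drop.
left. have : size s <= size (rcons p j) by rewrite E size_take_min geq_minr.
rewrite size_rcons => H2. have Hsz : size s = size (rcons p j) by rewrite size_rcons; apply/eqP; rewrite eqn_leq H2 H.
by rewrite E Hsz take_size.
Qed.

Lemma prefix_take_take (r q : pos) n : prefix r (take n q) -> r = take (size r) q.
Proof.
move=> H; rewrite {1}(prefix_take H) -take_min; congr take.
apply/minn_idPl.
have : size r <= size (take n q) by case/prefixP: H => s ->; rewrite size_cat leq_addr.
rewrite size_take_min => Hr. exact: leq_trans Hr (geq_minl _ _).
Qed.

From mathcomp Require Import zify.
Section Vol.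
Variables (F : Type) (ar : F -> nat) (O : Type) (olt : O -> O -> Prop).

Lemma vol_lemma (t : O -> pt F) (pi : O -> pos) (beta : O) (g : pt F) (p : pos) :
  (forall gamma, olt gamma beta -> wf ar (t gamma) /\ t gamma (pi gamma) <> None) ->
  is_limit olt beta ->
  (forall b, olt b beta -> exists2 c, ole olt b c /\ olt c beta & pi c = p) ->
  is_liminf ar olt (fun i => ctx (t i) (pi i)) beta g -> total_term g -> False.
Proof.
move=> Ht [[b0 Hb0] _] Hvol [b [Hglb [Hgwf [Hub Hmin]]]] Htg.
have [m [Hmp Hgm Hdeep]] := deepest p Hgwf.
set qs := take m p.
have [f Hf] : exists f, g qs = Some (Sym f).
  case E: (g qs) => [[f|]|]; [by exists f | by have := Htg qs; rewrite E | by []].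
set h : pt F := fun r => if r == qs then Some (Bot F) else if prefix qs r then None else g r.
have Hhwf : wf ar h.
  move: Hgwf => [Hg0 Hgw]; split.
    rewrite /h; case: (boolP ([::] == qs)) => // Hq. by rewrite prefixs0 eq_sym (negbTE Hq).
  move=> p' j; rewrite /h.
  case: (boolP (rcons p' j == qs)) => H1.
    have Hsz := f_equal size (eqP H1); rewrite size_rcons in Hsz.
    have Hp1 : (p' == qs) = false.
      apply/negbTE; apply/eqP => E; rewrite E in Hsz; lia.
    have Hp2 : prefix qs p' = false.
      apply/negbTE/negP => /prefixP [s E]; rewrite E size_cat in Hsz; lia.
    rewrite Hp1 Hp2. split => // _. apply: (proj1 (Hgw p' j)). by rewrite (eqP H1) Hf.
  case: (boolP (prefix qs (rcons p' j))) => H2.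
    have [E|Hp] := prefix_rconsE H2; first by rewrite E eqxx in H1.
    rewrite Hp. split => // [[f']]. by case: ifP.
  have Hp : prefix qs p' = false.
    by apply/negbTE; apply: contra H2 => H; apply: prefix_trans H (prefix_rcons _ _).
  have Hq : (p' == qs) = false.
    by apply/negbTE; apply: contra H2 => /eqP ->; apply: prefix_rcons.
  rewrite Hp Hq. exact: Hgw.
have Hbh : forall bb, olt bb beta -> le_bot (b bb) h.
  move=> bb Hbb r Hr1 Hr2.
  have [Hbwf [Hlow _]] := Hglb bb Hbb.
  have Hub' : le_bot (b bb) g := Hub _ (ex_intro2 _ _ bb Hbb erefl).
  have Hgr := Hub' r Hr1 Hr2.
  have Hcase : (r == qs) || prefix qs r -> False.
    move=> Hrq.
    have [f' Hf'] : exists f', b bb qs = Some (Sym f').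
      case/orP: Hrq => [/eqP <-|/prefixP [s Es]].
        by case E: (b bb r) Hr1 Hr2 => [[f'|]|] //; exists f'.
      case: s Es => [|x s] Es.
        rewrite cats0 in Es; rewrite -Es.
        by case E: (b bb r) Hr1 Hr2 => [[f'|]|] //; exists f'.
      have : b bb (rcons qs x ++ s) <> None by rewrite cat_rcons -Es.
      move/(wf_prefix Hbwf)/(wf_rcons Hbwf) => [f' Hf' _]; by exists f'.
    have [gamma [Hg1 Hg2] Hpg] := Hvol bb Hbb.
    have Hc : ctx (t gamma) (pi gamma) qs = Some (Sym f').
      rewrite -Hf'; apply: (Hlow _ (ex_intro2 _ _ gamma (conj Hg1 Hg2) erefl)); by rewrite Hf'.
    rewrite /ctx /repl Hpg in Hc.
    case: ifP Hc => Hpq Hc.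
      by move: Hc; rewrite /botpt; case: (drop _ _).
    have Hmlt : m < size p.
      rewrite ltn_neqAle Hmp andbT; apply/negP => /eqP Em.
      by move: Hpq; rewrite /qs Em take_size prefix_refl.
    have [Hwg Hpn] := Ht gamma Hg2. rewrite Hpg in Hpn.
    have Htm1 := wf_take (n:=m.+1) Hwg Hpn.
    rewrite (take_nth 0 Hmlt) in Htm1.
    move/(wf_rcons Hwg): Htm1 => [f'' Hf'' Hj].
    rewrite -/qs Hc in Hf''. case: Hf'' => Ef; subst f''.
    have Hgq : g qs = Some (Sym f') by rewrite (Hub' qs) ?Hf'.
    have := Hdeep m.+1 (ltnSn m) Hmlt. rewrite (take_nth 0 Hmlt).
    move: Hgwf => [_ Hgw] Hn. apply: (proj2 (Hgw _ _) _) Hn. by exists f'.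
  rewrite /h. case: ifP => [Hrq|Hrq]; first by exfalso; apply: Hcase; rewrite Hrq.
  case: ifP => Hpr; first by exfalso; apply: Hcase; rewrite Hpr orbT.
  by [].
have Hgh : le_bot g h.
  apply: Hmin => // x [bb Hbb ->]; exact: Hbh.
have : h qs = g qs by apply: Hgh; rewrite Hf.
by rewrite /h eqxx Hf.
Qed.
End Vol.

From Stdlib Require Import Classical.

Section Ord.
Variables (O : Type) (olt : O -> O -> Prop).
Hypothesis Hwo : well_order olt.

Lemma lt_trans a b c : olt a b -> olt b c -> olt a c.
Proof. by case: Hwo => H _; apply: H. Qed.
Lemma lt_irr a : ~ olt a a.
Proof. by case: Hwo => _ [H _]. Qed.
Lemma tri a b : olt a b \/ a = b \/ olt b a.
Proof. by case: Hwo => _ [_ [H _]]. Qed.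
Lemma wfo : well_founded olt.
Proof. by case: Hwo => _ [_ [_ H]]. Qed.

Lemma ole_lt a b c : ole olt a b -> olt b c -> olt a c.
Proof. case=> [H|->] // H2; exact: lt_trans H H2. Qed.
Lemma lt_ole a b c : olt a b -> ole olt b c -> olt a c.
Proof. move=> H [H2|<-] //; exact: lt_trans H H2. Qed.
Lemma ole_trans a b c : ole olt a b -> ole olt b c -> ole olt a c.
Proof. case=> [H|->] // H2; left; exact: lt_ole H H2. Qed.

Lemma min_exists (P : O -> Prop) : (exists x, P x) -> exists x, P x /\ forall y, P y -> ~ olt y x.
Proof.
move=> [x Hx]; apply: NNPP => Hn.
have : forall y, ~ P y.
  move=> y; elim/(well_founded_ind wfo): y => y IH Hy.
  apply: Hn; exists y; split => // w Hw Hwy; exact: IH w Hwy Hw.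
by move/(_ x).
Qed.

Lemma succ_exists i : (exists c, olt i c) -> exists j, is_succ olt i j.
Proof.
move=> Hc; have [j [Hj Hmin]] := min_exists Hc.
exists j; split => // c Hic.
case: (tri c j) => [Hcj|[->|Hjc]]; [by exfalso; exact: Hmin c Hic Hcj|by right|by left].
Qed.

Lemma classify j : is_least olt j \/ (exists i, is_succ olt i j) \/ is_limit olt j.
Proof.
case: (classic (exists a, olt a j)) => [Hex|Hn]; last first.
  left => a Ha; apply: Hn; by exists a.
case: (classic (forall a, olt a j -> exists2 b, olt a b & olt b j)) => Hl.
  by right; right.
right; left.
have [a Ha] : exists a, ~ (olt a j -> exists2 b, olt a b & olt b j).
  by apply: not_all_ex_not.
exists a. have Haj : olt a j by apply: NNPP => H; apply: Ha => /H.
split => // c Hac.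
case: (tri c j) => [Hcj|[->|Hjc]]; [|by right|by left].
by exfalso; apply: Ha => _; exists c.
Qed.

Lemma least_uniq a b : is_least olt a -> is_least olt b -> a = b.
Proof. move=> Ha Hb; case: (tri a b) => [H|[//|H]]; [by case: (Hb _ H)|by case: (Ha _ H)]. Qed.

Lemma succ_ge i j b : is_succ olt i j -> olt b j -> ole olt b i.
Proof.
move=> [Hij Hs] Hbj; case: (tri b i) => [H|[->|H]]; [by left|by right|].
exfalso; have := Hs _ H => Hjb. exact: lt_irr (lt_ole Hbj Hjb).
Qed.

Lemma succ_not_limit i j : is_succ olt i j -> ~ is_limit olt j.
Proof.
move=> [Hij Hs] [_ Hl]; have [b Hib Hbj] := Hl _ Hij.
exact: lt_irr (lt_ole Hbj (Hs _ Hib)).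
Qed.

Lemma least_not_limit j : is_least olt j -> ~ is_limit olt j.
Proof. by move=> Hj [[a Ha] _]; exact: Hj a Ha. Qed.

End Ord.

Section Main.
Variables (F V : Type) (ar : F -> nat) (R : rule F V -> Prop).
Variables (O : Type) (olt : O -> O -> Prop) (alpha : O) (t : O -> pt F) (pi : O -> pos).
Hypothesis Hwo : well_order olt.
Hypothesis Hwf : forall i, olt i alpha -> wf ar (t i).
Hypothesis Hstep : forall i j, olt i alpha -> is_succ olt i j -> rstep ar R (t i) (pi i) (t j).
Hypothesis Hlim : forall lam, is_limit olt lam -> olt lam alpha ->
  is_liminf ar olt (fun i => ctx (t i) (pi i)) lam (t lam).

Lemma npref (q : pos) c n : (forall n, pi c <> take n q) -> ~~ prefix (pi c) (take n q).
Proof. move=> Hq; apply/negP => H; apply: (Hq (size (pi c))); exact: prefix_take_take H. Qed.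

Lemma stable lam beta0 q :
  ole olt lam alpha -> olt beta0 lam -> total_term (t beta0) ->
  (forall c, ole olt beta0 c -> olt c lam -> forall n, pi c <> take n q) ->
  forall j, ole olt beta0 j -> olt j lam -> forall n, t j (take n q) = t beta0 (take n q).
Proof.
move=> Hla Hb0 Htb Hnp j; elim/(well_founded_ind (wfo Hwo)): j => j IH Hbj Hjl n.
case: Hbj => [Hbj|<-] //.
have Hja : olt j alpha := lt_ole Hwo Hjl Hla.
have Hb0a : olt beta0 alpha := lt_ole Hwo Hb0 Hla.
case: (classify Hwo j) => [Hl|[[i Hs]|Hl]].
- by case: (Hl _ Hbj).
- have Hij := Hs.1. have Hbi := succ_ge Hwo Hs Hbj.
  have Hil := lt_trans Hwo Hij Hjl. have Hia := lt_trans Hwo Hij Hja.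
  have [l [r [sigma [_ [_ [_ Ht']]]]]] := Hstep Hia Hs.
  rewrite Ht' /repl (negbTE (npref n (Hnp i Hbi Hil))). exact: IH.
- have Hc : forall k, ole olt beta0 k -> olt k j -> forall m,
      ctx (t k) (pi k) (take m q) = t beta0 (take m q).
    move=> k Hbk Hkj m. rewrite /ctx /repl (negbTE (npref m (Hnp k Hbk (lt_trans Hwo Hkj Hjl)))).
    exact: (IH k Hkj Hbk (lt_trans Hwo Hkj Hjl) m).
  exact: (spine_lemma (Hwf Hb0a) Htb Hbj Hc (Hlim Hl Hja)).
Qed.

Lemma pick_beta0 lam (q : pos) : is_limit olt lam -> (forall p, ~ volatile olt lam pi p) ->
  exists beta0, olt beta0 lam /\ forall c, ole olt beta0 c -> olt c lam -> forall n, pi c <> take n q.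
Proof.
move=> Hl Hnv.
have Hone : forall p, exists b, olt b lam /\ forall c, ole olt b c -> olt c lam -> pi c <> p.
  move=> p; apply: NNPP => Hn; apply: (Hnv p); split => // b Hb.
  apply: NNPP => Hn2; apply: Hn; exists b; split => // c Hbc Hcl Hpc; apply: Hn2; by exists c.
have : forall N, exists beta0, olt beta0 lam /\ forall c, ole olt beta0 c -> olt c lam -> forall n, n < N -> pi c <> take n q.
  elim=> [|N [b0 [Hb0 Hb0P]]].
    case: Hl => [[a Ha] _]; by exists a.
  have [b1 [Hb1 Hb1P]] := Hone (take N q).
  case: (tri Hwo b0 b1) => [H|[E|H]]; [| rewrite -E in Hb1P |].
  + exists b1; split => // c Hc Hcl n; rewrite ltnS leq_eqVlt => /orP [/eqP ->|Hn]; first exact: Hb1P.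
    exact: (Hb0P c (ole_trans Hwo (or_introl H) Hc) Hcl n Hn).
  + exists b0; split => // c Hc Hcl n; rewrite ltnS leq_eqVlt => /orP [/eqP ->|Hn]; [exact: Hb1P|exact: Hb0P].

  + exists b0; split => // c Hc Hcl n; rewrite ltnS leq_eqVlt => /orP [/eqP ->|Hn]; last exact: Hb0P.
    exact: (Hb1P c (ole_trans Hwo (or_introl H) Hc) Hcl).
move/(_ (size q).+1) => [b0 [Hb0 HP]]; exists b0; split => // c Hc Hcl n.
case: (leqP n (size q)) => Hn; first by apply: HP.
rewrite take_oversize ?(ltnW Hn) // -{1}(take_size q). by apply: HP.
Qed.

Lemma limit_total lam g : is_limit olt lam -> ole olt lam alpha ->
  (forall i, olt i lam -> total_term (t i)) ->
  (forall p, ~ volatile olt lam pi p) ->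
  is_liminf ar olt (fun i => ctx (t i) (pi i)) lam g -> total_term g.
Proof.
move=> Hl Hla Htot Hnv Hg q.
have [b0 [Hb0 HP]] := pick_beta0 q Hl Hnv.
have Hb0a := lt_ole Hwo Hb0 Hla.
have Hc : forall k, ole olt b0 k -> olt k lam -> forall n,
    ctx (t k) (pi k) (take n q) = t b0 (take n q).
  move=> k Hbk Hkl n; rewrite /ctx /repl (negbTE (npref n (HP k Hbk Hkl))).
  exact: (stable Hla Hb0 (Htot _ Hb0) HP Hbk Hkl).
have := spine_lemma (Hwf Hb0a) (Htot _ Hb0) Hb0 Hc Hg (size q).
rewrite take_size => ->. exact: Htot.
Qed.

End Main.

Theorem lemma3p15 (F V : Type) (ar : F -> nat) (R : rule F V -> Prop)
  (HR : is_TRS ar R)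
  (O : Type) (olt : O -> O -> Prop) (Hwo : well_order olt)
  (z alpha : O) (t : O -> pt F) (pi : O -> pos) (s u : pt F)
  (HS : reduction ar olt R z alpha t pi)
  (Hs : t z = s) (Hst : total_term s)
  (Hconv : strongly_pconverges ar olt alpha t pi u) :
  total_reduction olt alpha t u <->
  ~ (exists beta p, ole olt beta alpha /\ volatile olt beta pi p).
Proof.
move: HS => [Hz [Hwf Hstep]]. move: Hconv => [Huwf [Hlim [Hnl Hal]]].
split.
- move=> [Htot Htu] [beta [p [Hba [Hbl Hv]]]].
  have Hpos : forall gamma, olt gamma beta -> wf ar (t gamma) /\ t gamma (pi gamma) <> None.
    move=> gamma Hg. have Hga := lt_ole Hwo Hg Hba. split; first exact: Hwf.
    have [j Hj] := succ_exists Hwo (ex_intro _ beta Hg).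
    have [l [r [sigma [HRlr [_ [Hl _]]]]]] := Hstep _ _ Hga Hj.
    have := Hl [::]. rewrite cats0 => ->. have [_ [_ [Hnv _]]] := HR _ _ HRlr.
    case: l Hnv HRlr {Hl} => [x|f ts] Hnv _; [by case: (Hnv x)| by []].
  case: Hba => [Hba|Hba].
  + apply: (vol_lemma Hpos Hbl Hv (Hlim _ Hbl Hba)). exact: Htot.
  + subst beta. exact: (vol_lemma Hpos Hbl Hv (Hal Hbl) Htu).
- move=> Hnv.
  have Hnv' : forall lam, ole olt lam alpha -> forall p, ~ volatile olt lam pi p.
    move=> lam Hla p Hv; apply: Hnv; by exists lam, p.
  have Htot : forall i, olt i alpha -> total_term (t i).
    move=> i; elim/(well_founded_ind (wfo Hwo)): i => i IH Hia.
    case: (classify Hwo i) => [Hl|[[k Hsu]|Hl]].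
    + by rewrite (least_uniq Hwo Hl Hz) Hs.
    + have Hka := lt_trans Hwo Hsu.1 Hia.
      exact: step_total HR (Hstep _ _ Hka Hsu) (IH _ Hsu.1 Hka).
    + exact: (limit_total Hwo Hwf Hstep Hlim Hl (or_introl Hia)
        (fun k Hk => IH k Hk (lt_trans Hwo Hk Hia)) (Hnv' _ (or_introl Hia)) (Hlim _ Hl Hia)).
  split => //.
  case: (classify Hwo alpha) => [Hl|[[k Hsu]|Hl]].
  + by rewrite (Hnl (least_not_limit Hl)) (least_uniq Hwo Hl Hz) Hs.
  + rewrite (Hnl (succ_not_limit Hwo Hsu)).
    exact: step_total HR (Hstep _ _ Hsu.1 Hsu) (Htot _ Hsu.1).
  + exact: (limit_total Hwo Hwf Hstep Hlim Hl (or_intror erefl)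
      Htot (Hnv' _ (or_intror erefl)) (Hal Hl)).
Qed.
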